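(* Let $C_1$ and $C_2$ be two linear MDS codes of the same length $n$ over $\mathbb{F}_q$. If $C_1\not\subseteq C_2$, then $wt(C_1\setminus(C_1\cap C_2))=wt(C_1)$.
   Context: An $[n,k,d]_q$ linear code is a $k$-dimensional subspace of $\mathbb{F}_q^n$ with minimum Hamming distance $d$; it is MDS if $d=n-k+1$. For a subset $\mathcal{A}\subseteq\mathbb{F}_q^n$, $wt(\mathcal{A})=\min\{wt(\bm a):\bm a\in\mathcal{A}\setminus\{\bm 0\}\}$, where $wt(\bm a)$ is the Hamming weight (number of nonzero coordinates). *)

(* Defs.v *)
From HB Require Import structures.
From mathcomp Require Import all_boot all_order all_algebra.
Set Implicit Arguments. Unset Strict Implicit. Unset Printing Implicit Defensive.
Import GRing.Theory.
Local Open Scope ring_scope.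

Definition hwt (F : fieldType) (n : nat) (a : 'rV[F]_n) : nat :=
  #|[set i : 'I_n | a 0 i != 0]|.

(* wt(A) = min { wt a : a in A, a <> 0 }.  Convention: the value is n
   when A has no nonzero element (the paper never uses this case). *)
Definition minwt (F : finFieldType) (n : nat) (A : {pred 'rV[F]_n}) : nat :=
  \big[minn/n]_(a : 'rV[F]_n | (a \in A) && (a != 0)) hwt a.

Definition MDS (F : finFieldType) (n : nat) (C : {vspace 'rV[F]_n}) : Prop :=
  minwt (mem C) = (n - \dim C + 1)%N.

(* Main.v *)
Require Import Defs.
From HB Require Import structures.
From mathcomp Require Import all_boot all_order all_algebra all_field zify.
Set Implicit Arguments. Unset Strict Implicit. Unset Printing Implicit Defensive.
Import GRing.Theory.
Local Open Scope ring_scope.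

Lemma vanish_exists (F : finFieldType) (n : nat) (C : {vspace 'rV[F]_n})
  (T : {set 'I_n}) : (#|T| < \dim C)%N ->
  exists2 y, y \in C & (y != 0) && [forall i in T, y 0 i == 0].
Proof.
move=> hT.
pose f (v : 'rV[F]_n) : 'rV[F]_#|T| := \row_j v 0 (enum_val j).
have /dinjectivePn [x xC [y /andP [yx yC] fxy]] : ~~ dinjectiveb f (mem C).
  apply/negP => /dinjectiveP inj.
  have := @leq_card_in _ _ f _ inj; rewrite card_vspace card_mx mul1n.
  by rewrite leqNgt ltn_exp2l ?hT // finNzRing_gt1.
exists (y - x); first by rewrite rpredB.
rewrite subr_eq0 yx /=; apply/forall_inP => i iT.
have := congr1 (fun r : 'rV_#|T| => r 0 (enum_rank_in iT i)) fxy.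
rewrite /f !mxE enum_rankK_in // => ->.
by rewrite subrr.
Qed.

Lemma bigmin_seq_le (T : eqType) (r : seq T) (P : pred T) (G : T -> nat) n a :
  a \in r -> P a -> (\big[minn/n]_(i <- r | P i) G i <= G a)%N.
Proof.
elim: r => [|b r IH] //; rewrite inE big_cons => /orP [/eqP <-|ar] Pa.
  by rewrite Pa geq_minl.
case: (P b); last exact: IH.
by rewrite geq_min IH ?orbT.
Qed.

Lemma minwt_le (F : finFieldType) (n : nat) (A : {pred 'rV[F]_n}) a :
  a \in A -> a != 0 -> (minwt A <= hwt a)%N.
Proof.
move=> aA a0; rewrite /minwt; apply: bigmin_seq_le; first exact: mem_index_enum.
by rewrite aA a0.
Qed.

Lemma minwt_ge (F : finFieldType) (n : nat) (A : {pred 'rV[F]_n}) m :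
  (m <= n)%N -> (forall a, a \in A -> a != 0 -> (m <= hwt a)%N) ->
  (m <= minwt A)%N.
Proof.
move=> mn H; rewrite /minwt; elim/big_ind: _ => //.
  by move=> u v mu mv; rewrite leq_min mu mv.
by move=> a /andP [aA a0]; apply: H.
Qed.

Lemma hwt_lt (F : finFieldType) (n : nat) (x y : 'rV[F]_n) l :
  (forall i, x 0 i = 0 -> y 0 i = 0) -> x 0 l != 0 -> y 0 l = 0 ->
  (hwt y < hwt x)%N.
Proof.
move=> H xl yl; apply: proper_card; apply/properP; split.
  apply/subsetP => i; rewrite !inE; apply: contra => /eqP /H ->; by [].
by exists l; rewrite !inE ?xl ?yl ?eqxx.
Qed.

Lemma card_zeros (F : finFieldType) (n : nat) (x : 'rV[F]_n) :
  #|[set i : 'I_n | x 0 i == 0]| + hwt x = n :> nat.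
Proof.
rewrite /hwt -[RHS]card_ord -(cardsC [set i : 'I_n | x 0 i == 0]).
congr (_ + _)%N; apply: eq_card => i; by rewrite !inE.
Qed.

Lemma nz_coord (F : finFieldType) (n : nat) (x : 'rV[F]_n) :
  x != 0 -> exists j, x 0 j != 0.
Proof.
move=> x0; apply/existsP; apply: contraR x0 => /existsPn H.
apply/eqP/rowP => j; rewrite !mxE.
by have := H j; rewrite negbK => /eqP.
Qed.

Lemma exists_small (F : finFieldType) (n : nat) (C1 C2 : {vspace 'rV[F]_n}) w :
  forall x, x \in C1 -> x \notin C2 -> (hwt x <= w)%N ->
  exists2 z, z \in C1 & (z \notin C2) && (hwt z <= n - \dim C1 + 1)%N.
Proof.
elim: w => [|w IH] x xC1 xC2 hx.
  by exists x => //; rewrite xC2 (leq_trans hx).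
have [small|big] := leqP (hwt x) (n - \dim C1 + 1).
  by exists x => //; rewrite xC2.
have x0 : x != 0 by apply: contraNneq xC2 => ->; rewrite mem0v.
have [j xj] := nz_coord x0.
pose Z := [set i : 'I_n | x 0 i == 0].
have hZ := card_zeros x.
have hT : (#|j |: Z| < \dim C1)%N.
  have := cardsU1 j Z; have := leq_b1 (j \notin Z); move: hZ big; rewrite -/Z; lia.
have [y yC1 /andP [y0 /forall_inP yT]] := vanish_exists hT.
have yZ i : x 0 i = 0 -> y 0 i = 0.
  by move=> xi; apply/eqP/yT; rewrite !inE xi eqxx orbT.
have yj : y 0 j = 0 by apply/eqP/yT; rewrite !inE eqxx.
have ltyx := hwt_lt yZ xj yj.
case yC2: (y \in C2).
  have [l yl] := nz_coord y0.
  pose x' := x - (x 0 l / y 0 l) *: y.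
  have x'C1 : x' \in C1 by rewrite rpredB ?rpredZ.
  have x'C2 : x' \notin C2.
    apply: contra xC2 => h.
    have -> : x = x' + (x 0 l / y 0 l) *: y by rewrite /x' subrK.
    by rewrite rpredD ?rpredZ.
  have xl : x 0 l != 0 by apply: contra yl => /eqP /yZ ->.
  have lt' : (hwt x' < hwt x)%N.
    apply: (hwt_lt (l := l)) => //.
      by move=> i xi; rewrite /x' !mxE xi (yZ i xi) mulr0 subrr.
    by rewrite /x' !mxE divfK // subrr.
  apply: (IH x') => //; move: hx lt'; lia.
apply: (IH y) => //; first by rewrite yC2.
move: hx ltyx; lia.
Qed.

Theorem lemma4 (F : finFieldType) (n : nat) (C1 C2 : {vspace 'rV[F]_n}) :
  MDS C1 -> MDS C2 -> ~~ (C1 <= C2)%VS ->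
  minwt [pred a : 'rV[F]_n | (a \in C1) && (a \notin (C1 :&: C2)%VS)]
  = minwt (mem C1).
Proof.
rewrite /MDS => M1 _ nsub.
have : [exists x : 'rV[F]_n, (x \in C1) && (x \notin C2)].
  apply: contraR nsub => /existsPn H; apply/subvP => u uC.
  by have := H u; rewrite uC /= negbK.
case/existsP => x /andP [xC1 xC2].
have [z zC1 /andP [zC2 hz]] := exists_small xC1 xC2 (leqnn _).
have z0 : z != 0 by apply: contraNneq zC2 => ->; rewrite mem0v.
have dpos : (0 < \dim C1)%N.
  rewrite lt0n dimv_eq0; apply: contra nsub => /eqP ->; exact: sub0v.
apply/eqP; rewrite eqn_leq; apply/andP; split.
  rewrite M1; apply: leq_trans hz; apply: minwt_le => //.
  by rewrite inE zC1 memv_cap zC1.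
apply: minwt_ge => [|a]; first by apply: (leq_trans (minwt_le (A := mem C1) zC1 z0)); rewrite -[X in (_ <= X)%N]card_ord max_card.
rewrite inE => /andP [aC1 _] a0; exact: minwt_le.
Qed.
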